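(* For every irreducible $*$-representation $\pi$ of $\mathcal{A}(\mathbb{C}P^2_q)$ by bounded operators on a Hilbert space, either $\ker\pi(p_{11})=\{0\}$, or $\pi(p_{11})=\pi(p_{12})=\pi(p_{13})=0$ (and hence also $\pi(p_{21})=\pi(p_{31})=0$).
   Context: Fix $0<q<1$. $\mathcal{A}(S^5_q)$ is the unital $*$-algebra generated by $z_1,z_2,z_3$ and adjoints with relations $z_iz_j=qz_jz_i$ ($i<j$), $z_i^*z_j=qz_jz_i^*$ ($i\ne j$), $[z_1^*,z_1]=0$, $[z_2^*,z_2]=(1-q^2)z_1z_1^*$, $[z_3^*,z_3]=(1-q^2)(z_1z_1^*+z_2z_2^* )$, $z_1z_1^*+z_2z_2^*+z_3z_3^*=1$. $\mathcal{A}(\mathbb{C}P^2_q)$ is the unital $*$-subalgebra generated by $p_{ij}:=z_i^*z_j$; note $p_{ij}^*=p_{ji}$. *)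

(* Defs.v *)
From Stdlib Require Import Reals.
Open Scope R_scope.

Record C := mkC { Cre : R; Cim : R }.
Definition C0 : C := mkC 0 0.
Definition C1 : C := mkC 1 0.
Definition CofR (r : R) : C := mkC r 0.
Definition Cadd (a b : C) : C := mkC (Cre a + Cre b) (Cim a + Cim b).
Definition Cmul (a b : C) : C :=
  mkC (Cre a * Cre b - Cim a * Cim b) (Cre a * Cim b + Cim a * Cre b).
Definition Cconj (a : C) : C := mkC (Cre a) (- Cim a).

(* inner product linear in the first argument, conjugate-linear in the second *)
Record Hilbert := {
  hV :> Type;
  hzero : hV;
  hadd : hV -> hV -> hV;
  hopp : hV -> hV;
  hscal : C -> hV -> hV;
  hinner : hV -> hV -> C;
  haddA : forall x y z, hadd x (hadd y z) = hadd (hadd x y) z;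
  haddC : forall x y, hadd x y = hadd y x;
  hadd0 : forall x, hadd x hzero = x;
  haddN : forall x, hadd x (hopp x) = hzero;
  hscal1 : forall x, hscal C1 x = x;
  hscalA : forall a b x, hscal a (hscal b x) = hscal (Cmul a b) x;
  hscalDr : forall a x y, hscal a (hadd x y) = hadd (hscal a x) (hscal a y);
  hscalDl : forall a b x, hscal (Cadd a b) x = hadd (hscal a x) (hscal b x);
  hinnerDl : forall x y z, hinner (hadd x y) z = Cadd (hinner x z) (hinner y z);
  hinnerZl : forall a x z, hinner (hscal a x) z = Cmul a (hinner x z);
  hinner_sym : forall x y, hinner y x = Cconj (hinner x y);
  hinner_pos : forall x, 0 <= Cre (hinner x x);
  hinner_def : forall x, hinner x x = C0 -> x = hzero;
  hcomplete : forall u : nat -> hV,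
    (forall eps, 0 < eps -> exists N, forall m n, (N <= m)%nat -> (N <= n)%nat ->
        sqrt (Cre (hinner (hadd (u m) (hopp (u n))) (hadd (u m) (hopp (u n))))) < eps) ->
    exists l, forall eps, 0 < eps -> exists N, forall n, (N <= n)%nat ->
        sqrt (Cre (hinner (hadd (u n) (hopp l)) (hadd (u n) (hopp l)))) < eps
}.

Arguments hzero {h}.

Definition hnorm {H : Hilbert} (x : H) : R := sqrt (Cre (hinner H x x)).
Definition hsub {H : Hilbert} (x y : H) : H := hadd H x (hopp H y).

Definition converges {H : Hilbert} (u : nat -> H) (l : H) : Prop :=
  forall eps, 0 < eps -> exists N, forall n, (N <= n)%nat -> hnorm (hsub (u n) l) < eps.

Definition bounded_op {H : Hilbert} (T : H -> H) : Prop :=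
  (forall x y, T (hadd H x y) = hadd H (T x) (T y)) /\
  (forall a x, T (hscal H a x) = hscal H a (T x)) /\
  (exists M, forall x, hnorm (T x) <= M * hnorm x).

Definition closed_subspace {H : Hilbert} (S : H -> Prop) : Prop :=
  S hzero /\ (forall x y, S x -> S y -> S (hadd H x y)) /\
  (forall a x, S x -> S (hscal H a x)) /\
  (forall u l, (forall n, S (u n)) -> converges u l -> S l).

Inductive idx := I1 | I2 | I3.

Inductive fterm (G : Type) :=
| FC : C -> fterm G
| FG : G -> fterm G
| FAdd : fterm G -> fterm G -> fterm G
| FMul : fterm G -> fterm G -> fterm G.
Arguments FC {G}. Arguments FG {G}. Arguments FAdd {G}. Arguments FMul {G}.

Inductive gen5 := Z (i : idx) | Zs (i : idx).
Definition gstar (g : gen5) : gen5 := match g with Z i => Zs i | Zs i => Z i end.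

Fixpoint fstar (t : fterm gen5) : fterm gen5 :=
  match t with
  | FC c => FC (Cconj c)
  | FG g => FG (gstar g)
  | FAdd a b => FAdd (fstar a) (fstar b)
  | FMul a b => FMul (fstar b) (fstar a)
  end.

Definition idx_lt (i j : idx) : Prop :=
  match i, j with I1, I2 | I1, I3 | I2, I3 => True | _, _ => False end.

(* S5eq q a b : a = b holds in A(S^5_q), i.e. the congruence generated by the
   complex *-algebra axioms and the defining relations (closed under * ). *)
Inductive S5eq (q : R) : fterm gen5 -> fterm gen5 -> Prop :=
| S5refl a : S5eq q a a
| S5sym a b : S5eq q a b -> S5eq q b a
| S5trans a b c : S5eq q a b -> S5eq q b c -> S5eq q a c
| S5addc a a' b b' : S5eq q a a' -> S5eq q b b' -> S5eq q (FAdd a b) (FAdd a' b')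
| S5mulc a a' b b' : S5eq q a a' -> S5eq q b b' -> S5eq q (FMul a b) (FMul a' b')
| S5starc a b : S5eq q a b -> S5eq q (fstar a) (fstar b)
| S5addA a b c : S5eq q (FAdd a (FAdd b c)) (FAdd (FAdd a b) c)
| S5addC a b : S5eq q (FAdd a b) (FAdd b a)
| S5add0 a : S5eq q (FAdd a (FC C0)) a
| S5addN a : S5eq q (FAdd a (FMul (FC (CofR (-1))) a)) (FC C0)
| S5mulA a b c : S5eq q (FMul a (FMul b c)) (FMul (FMul a b) c)
| S5mul1l a : S5eq q (FMul (FC C1) a) a
| S5mul1r a : S5eq q (FMul a (FC C1)) a
| S5mulDl a b c : S5eq q (FMul (FAdd a b) c) (FAdd (FMul a c) (FMul b c))
| S5mulDr a b c : S5eq q (FMul a (FAdd b c)) (FAdd (FMul a b) (FMul a c))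
| S5cadd c d : S5eq q (FAdd (FC c) (FC d)) (FC (Cadd c d))
| S5cmul c d : S5eq q (FMul (FC c) (FC d)) (FC (Cmul c d))
| S5ccomm c a : S5eq q (FMul (FC c) a) (FMul a (FC c))
| S5rel1 i j : idx_lt i j ->
    S5eq q (FMul (FG (Z i)) (FG (Z j))) (FMul (FC (CofR q)) (FMul (FG (Z j)) (FG (Z i))))
| S5rel2 i j : i <> j ->
    S5eq q (FMul (FG (Zs i)) (FG (Z j))) (FMul (FC (CofR q)) (FMul (FG (Z j)) (FG (Zs i))))
| S5rel3 : S5eq q (FMul (FG (Zs I1)) (FG (Z I1))) (FMul (FG (Z I1)) (FG (Zs I1)))
| S5rel4 : S5eq q (FMul (FG (Zs I2)) (FG (Z I2)))
    (FAdd (FMul (FG (Z I2)) (FG (Zs I2)))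
          (FMul (FC (CofR (1 - q ^ 2))) (FMul (FG (Z I1)) (FG (Zs I1)))))
| S5rel5 : S5eq q (FMul (FG (Zs I3)) (FG (Z I3)))
    (FAdd (FMul (FG (Z I3)) (FG (Zs I3)))
          (FMul (FC (CofR (1 - q ^ 2)))
                (FAdd (FMul (FG (Z I1)) (FG (Zs I1))) (FMul (FG (Z I2)) (FG (Zs I2))))))
| S5rel6 : S5eq q (FAdd (FAdd (FMul (FG (Z I1)) (FG (Zs I1))) (FMul (FG (Z I2)) (FG (Zs I2))))
                        (FMul (FG (Z I3)) (FG (Zs I3)))) (FC C1).

(* ---------- A(CP^2_q): polynomials in the p_ij = z_i^* z_j ---------- *)
Definition genP := (idx * idx)%type.

Fixpoint iotaP (t : fterm genP) : fterm gen5 :=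
  match t with
  | FC c => FC c
  | FG (i, j) => FMul (FG (Zs i)) (FG (Z j))
  | FAdd a b => FAdd (iotaP a) (iotaP b)
  | FMul a b => FMul (iotaP a) (iotaP b)
  end.

Fixpoint evalP {H : Hilbert} (P : idx -> idx -> H -> H) (t : fterm genP) (x : H) : H :=
  match t with
  | FC c => hscal H c x
  | FG (i, j) => P i j x
  | FAdd a b => hadd H (evalP P a x) (evalP P b x)
  | FMul a b => evalP P a (evalP P b x)
  end.

(* A unital *-representation of A(CP^2_q) by bounded operators on H, given by
   the images pi i j := pi(p_ij) of the generators: well defined on the
   subalgebra (polynomials equal in A(S^5_q) have equal images), bounded, and
   *-preserving (pi(p_ij)^* = pi(p_ji), as p_ij^* = p_ji). *)
Record CP2rep (q : R) (H : Hilbert) := {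
  rpi : idx -> idx -> H -> H;
  rpi_bounded : forall i j, bounded_op (rpi i j);
  rpi_star : forall i j (x y : H),
    hinner H (rpi i j x) y = hinner H x (rpi j i y);
  rpi_wd : forall f g, S5eq q (iotaP f) (iotaP g) ->
    forall x, evalP rpi f x = evalP rpi g x
}.
Arguments rpi {q H}.

(* irreducible: the only closed subspaces invariant under pi(A(CP^2_q))
   (equivalently under all pi(p_ij)) are {0} and H *)
Definition irreducible {q : R} {H : Hilbert} (pi : CP2rep q H) : Prop :=
  forall S : H -> Prop, closed_subspace S ->
    (forall i j x, S x -> S (rpi pi i j x)) ->
    (forall x, S x -> x = hzero) \/ (forall x, S x).

(* Main.v *)
Require Import Defs.
From Stdlib Require Import Reals Lra List.
Import ListNotations.
Open Scope R_scope.
Local Notation C := Defs.C.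
Local Notation C1 := Defs.C1.
Local Notation C0 := Defs.C0.
Local Notation Z := Defs.Z.

Lemma Cext (a b : C) : Cre a = Cre b -> Cim a = Cim b -> a = b.
Proof. destruct a, b; simpl; intros; subst; reflexivity. Qed.

Lemma Cconj_CofR r : Cconj (CofR r) = CofR r.
Proof. apply Cext; simpl; lra. Qed.

Fixpoint wterm (l : list gen5) : fterm gen5 :=
  match l with [] => FC C1 | g :: r => FMul (FG g) (wterm r) end.
Definition W (k : C) (l : list gen5) : fterm gen5 := FMul (FC k) (wterm l).

Lemma mulc_l q a b c : S5eq q b c -> S5eq q (FMul a b) (FMul a c).
Proof. intro h. apply S5mulc; [apply S5refl | exact h]. Qed.

Lemma float q a k b : S5eq q (FMul a (FMul (FC k) b)) (FMul (FC k) (FMul a b)).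
Proof.
  eapply S5trans. apply S5mulA.
  eapply S5trans. apply S5mulc. apply S5sym, S5ccomm. apply S5refl.
  apply S5sym, S5mulA.
Qed.

Lemma wapp q l l' : S5eq q (FMul (wterm l) (wterm l')) (wterm (l ++ l')).
Proof.
  induction l; simpl. apply S5mul1l.
  eapply S5trans. apply S5sym, S5mulA. apply mulc_l, IHl.
Qed.

Lemma Wmul q k l k' l' : S5eq q (FMul (W k l) (W k' l')) (W (Cmul k k') (l ++ l')).
Proof.
  unfold W.
  eapply S5trans. apply S5sym, S5mulA.
  eapply S5trans. apply mulc_l, float.
  eapply S5trans. apply S5mulA.
  apply S5mulc. apply S5cmul. apply wapp.
Qed.

Fixpoint normP (t : fterm genP) : option (C * list gen5) :=
  match t with
  | FC c => Some (c, [])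
  | FG (i, j) => Some (C1, [Zs i; Z j])
  | FAdd _ _ => None
  | FMul a b => match normP a, normP b with
                | Some (k, l), Some (k', l') => Some (Cmul k k', l ++ l')
                | _, _ => None end
  end.

Lemma normP_ok q t : forall k l, normP t = Some (k, l) -> S5eq q (iotaP t) (W k l).
Proof.
  induction t; simpl; intros k l Hn.
  - injection Hn as <- <-. unfold W; simpl. apply S5sym, S5mul1r.
  - destruct g as [i j]. injection Hn as <- <-. unfold W; simpl.
    eapply S5trans. 2: apply S5sym, S5mul1l.
    apply mulc_l. apply S5sym, S5mul1r.
  - discriminate.
  - destruct (normP t1) as [[k1 l1]|]; [|discriminate].
    destruct (normP t2) as [[k2 l2]|]; [|discriminate].
    injection Hn as <- <-.
    eapply S5trans. apply S5mulc; [apply IHt1; reflexivity | apply IHt2; reflexivity].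
    apply Wmul.
Qed.

Definition idx_ltb i j := match i, j with I1, I2 | I1, I3 | I2, I3 => true | _, _ => false end.
Definition idx_eqb i j := match i, j with I1, I1 | I2, I2 | I3, I3 => true | _, _ => false end.

Definition swapc q (a b : gen5) : option C :=
  match a, b with
  | Z i, Z j => if idx_ltb i j then Some (CofR q) else None
  | Zs i, Z j => if idx_eqb i j then (match i with I1 => Some C1 | _ => None end)
                 else Some (CofR q)
  | Z i, Zs j => match i, j with I1, I1 => Some C1 | _, _ => None end
  | Zs j, Zs i => if idx_ltb i j then Some (CofR q) else None
  end.

Lemma rels q i j : idx_lt i j ->
  S5eq q (FMul (FG (Zs j)) (FG (Zs i))) (FMul (FC (CofR q)) (FMul (FG (Zs i)) (FG (Zs j)))).
Proof.
  intro h. pose proof (S5starc q _ _ (S5rel1 q i j h)) as E. cbn [fstar gstar] in E.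
  rewrite Cconj_CofR in E. eapply S5trans; [exact E | apply S5sym, S5ccomm].
Qed.

Lemma rel3a q : S5eq q (FMul (FG (Zs I1)) (FG (Z I1))) (FMul (FC C1) (FMul (FG (Z I1)) (FG (Zs I1)))).
Proof. eapply S5trans. apply S5rel3. apply S5sym, S5mul1l. Qed.
Lemma rel3b q : S5eq q (FMul (FG (Z I1)) (FG (Zs I1))) (FMul (FC C1) (FMul (FG (Zs I1)) (FG (Z I1)))).
Proof. eapply S5trans. apply S5sym, S5rel3. apply S5sym, S5mul1l. Qed.

Lemma swapc_ok q a b s : swapc q a b = Some s ->
  S5eq q (FMul (FG a) (FG b)) (FMul (FC s) (FMul (FG b) (FG a))).
Proof.
  destruct a as [i|i], b as [j|j], i, j; simpl; intro H; try discriminate;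
  injection H as <-;
  first [ apply S5rel1; exact I | apply S5rel2; discriminate | apply rel3a | apply rel3b
        | apply rels; exact I ].
Qed.

Fixpoint swap_at (n : nat) (l : list gen5) : list gen5 :=
  match n, l with
  | O, a :: b :: r => b :: a :: r
  | S n, a :: r => a :: swap_at n r
  | _, _ => l end.
Fixpoint swapc_at q (n : nat) (l : list gen5) : option C :=
  match n, l with
  | O, a :: b :: _ => swapc q a b
  | S n, _ :: r => swapc_at q n r
  | _, _ => None end.

Lemma wswap q n : forall l s, swapc_at q n l = Some s ->
  S5eq q (wterm l) (FMul (FC s) (wterm (swap_at n l))).
Proof.
  induction n; intros [|a l] s H; simpl in *; try discriminate.
  - destruct l as [|b r]; try discriminate. simpl.
    eapply S5trans. apply S5mulA.
    eapply S5trans. apply S5mulc. apply swapc_ok; exact H. apply S5refl.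
    eapply S5trans. apply S5sym, S5mulA.
    apply mulc_l. apply S5sym, S5mulA.
  - eapply S5trans. apply mulc_l, IHn, H. apply float.
Qed.

Lemma Wswap q n l k s : swapc_at q n l = Some s ->
  S5eq q (W k l) (W (Cmul k s) (swap_at n l)).
Proof.
  intro H. unfold W.
  eapply S5trans. apply mulc_l, wswap, H.
  eapply S5trans. apply S5mulA. apply S5mulc. apply S5cmul. apply S5refl.
Qed.

Lemma Wswap_rev q n l k : q <> 0 -> swapc_at q n (swap_at n l) = Some (CofR q) ->
  swap_at n (swap_at n l) = l ->
  S5eq q (W k l) (W (Cmul k (CofR (/q))) (swap_at n l)).
Proof.
  intros hq H1 H2. apply S5sym.
  pose proof (Wswap q n (swap_at n l) (Cmul k (CofR (/q))) _ H1) as E.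
  rewrite H2 in E.
  replace (Cmul (Cmul k (CofR (/ q))) (CofR q)) with k in E. exact E.
  destruct k; apply Cext; simpl; field; exact hq.
Qed.

Lemma Wfin q k k' l l' : k = k' -> l = l' -> S5eq q (W k l) (W k' l').
Proof. intros -> ->. apply S5refl. Qed.

Ltac fw n := eapply S5trans; [apply (Wswap _ n); reflexivity |].
Ltac rv n := eapply S5trans; [apply (Wswap_rev _ n); [assumption|reflexivity|reflexivity] |].
Ltac start := eapply S5trans; [apply normP_ok; reflexivity|];
  apply S5sym; eapply S5trans; [apply normP_ok; reflexivity|]; apply S5sym.
Ltac fin := apply Wfin; [unfold Cmul, CofR, C1; apply Cext; simpl; field;
             repeat split; assumption | reflexivity].

Definition Xp q (i j : idx) : fterm genP :=
  match i, j with
  | I1, I1 => FG (I1, I1)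
  | I1, _ => FMul (FC (CofR (q * q))) (FG (I1, j))
  | _, I1 => FMul (FC (CofR (/ (q * q)))) (FG (i, I1))
  | _, _ => FG (i, j) end.

Lemma keyC q (hq : q <> 0) i j :
  S5eq q (iotaP (FMul (FG (I1, I1)) (FG (i, j)))) (iotaP (FMul (Xp q i j) (FG (I1, I1)))).
Proof.
  destruct i, j; simpl Xp.
  - apply S5refl.
  - start. fw 2%nat. fw 1%nat. fw 2%nat. fin.
  - start. fw 2%nat. fw 1%nat. fw 2%nat. fin.
  - start. fw 0%nat. rv 1%nat. rv 0%nat. fin.
  - start. fw 0%nat. rv 1%nat. rv 0%nat. fw 2%nat. fw 1%nat. fw 2%nat. fin.
  - start. fw 0%nat. rv 1%nat. rv 0%nat. fw 2%nat. fw 1%nat. fw 2%nat. fin.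
  - start. fw 0%nat. rv 1%nat. rv 0%nat. fin.
  - start. fw 0%nat. rv 1%nat. rv 0%nat. fw 2%nat. fw 1%nat. fw 2%nat. fin.
  - start. fw 0%nat. rv 1%nat. rv 0%nat. fw 2%nat. fw 1%nat. fw 2%nat. fin.
Qed.

Lemma keyD q (hq : q <> 0) j : j = I2 \/ j = I3 ->
  S5eq q (iotaP (FMul (FG (j, I1)) (FG (I1, j))))
         (iotaP (FMul (FMul (FC (CofR (q * q))) (FG (j, j))) (FG (I1, I1)))).
Proof.
  intros [-> | ->]; start; fw 2%nat; fw 1%nat; fw 2%nat; fin.
Qed.

Lemma hcancel (V : Hilbert) (x : V) : hadd V x x = x -> x = hzero.
Proof.
  intro E.
  assert (H0 : hadd V (hadd V x x) (hopp V x) = hadd V x (hopp V x)) by (rewrite E; reflexivity).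
  rewrite <- haddA in H0. rewrite haddN in H0. rewrite hadd0 in H0. exact H0.
Qed.

Lemma hscal0 (V : Hilbert) a : hscal V a hzero = hzero.
Proof. apply hcancel. rewrite <- hscalDr, hadd0. reflexivity. Qed.

Lemma lin0 (V : Hilbert) (T : V -> V) :
  (forall x y, T (hadd V x y) = hadd V (T x) (T y)) -> T hzero = hzero.
Proof. intro Hl. apply hcancel. rewrite <- Hl, hadd0. reflexivity. Qed.

Lemma hscalC0 (V : Hilbert) (x : V) : hscal V C0 x = hzero.
Proof.
  apply hcancel. rewrite <- hscalDl.
  replace (Cadd C0 C0) with C0 by (apply Cext; simpl; ring). reflexivity.
Qed.

Lemma hopp_scal (V : Hilbert) (x : V) : hopp V x = hscal V (CofR (-1)) x.
Proof.
  assert (e : hadd V (hscal V (CofR (-1)) x) x = hzero).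
  { rewrite <- (hscal1 V x) at 2. rewrite <- hscalDl.
    replace (Cadd (CofR (-1)) C1) with C0 by (apply Cext; simpl; ring).
    apply hscalC0. }
  rewrite <- (hadd0 V (hopp V x)). rewrite <- e.
  rewrite (haddC V (hscal V (CofR (-1)) x) x). rewrite haddA.
  rewrite (haddC V (hopp V x) x). rewrite haddN. rewrite haddC. apply hadd0.
Qed.

Lemma hnorm_scaln1 (V : Hilbert) (v : V) : hnorm (hscal V (CofR (-1)) v) = hnorm v.
Proof.
  unfold hnorm. f_equal. rewrite hinnerZl.
  rewrite (hinner_sym V (hscal V (CofR (-1)) v) v), hinnerZl.
  destruct (hinner V v v); simpl; ring.
Qed.

Lemma zero_of_inner (V : Hilbert) (y : V) : Cre (hinner V y y) = 0 -> y = hzero.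
Proof.
  intro h. apply hinner_def. pose proof (hinner_sym V y y) as S.
  remember (hinner V y y) as c. destruct c as [a b]. unfold Cconj in S; simpl in *.
  injection S as S. apply Cext; simpl; lra.
Qed.

Lemma hinner_0r (V : Hilbert) (x : V) : hinner V x hzero = C0.
Proof.
  assert (h : hinner V hzero x = C0).
  { pose proof (hinnerDl V hzero hzero x) as E. rewrite hadd0 in E.
    remember (hinner V hzero x) as c. destruct c as [a b]. unfold Cadd in E; simpl in E.
    injection E as E1 E2. apply Cext; simpl; lra. }
  rewrite (hinner_sym V hzero x), h. apply Cext; simpl; lra.
Qed.

Lemma evalP_0 (V : Hilbert) (P : idx -> idx -> V -> V) t :
  (forall i j, P i j hzero = hzero) -> evalP P t hzero = hzero.
Proof.
  intro hP. induction t; simpl.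
  - apply hscal0.
  - destruct g; apply hP.
  - rewrite IHt1, IHt2. apply hadd0.
  - rewrite IHt2. exact IHt1.
Qed.

Lemma ker_closed (V : Hilbert) (T : V -> V) (hT : bounded_op T) u l :
  (forall n, T (u n) = hzero) -> converges u l -> T l = hzero.
Proof.
  intros Hu Hc. destruct hT as [Ha [Hs [M HM]]].
  assert (key : forall n, hnorm (T l) <= M * hnorm (hsub (u n) l)).
  { intro n.
    assert (E : T (hsub (u n) l) = hscal V (CofR (-1)) (T l)).
    { unfold hsub. rewrite Ha, Hu, haddC, hadd0, hopp_scal, Hs. reflexivity. }
    rewrite <- hnorm_scaln1, <- E. apply HM. }
  assert (pos : forall y : V, 0 <= hnorm y) by (intro; unfold hnorm; apply sqrt_pos).
  assert (Z0 : hnorm (T l) = 0).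
  { destruct (Rle_lt_or_eq_dec 0 (hnorm (T l)) (pos _)) as [lt|eq]; [|auto].
    exfalso.
    set (e := hnorm (T l) / (Rabs M + 1)).
    assert (ha : 0 <= Rabs M) by apply Rabs_pos.
    assert (ep : 0 < e) by (unfold e; apply Rdiv_lt_0_compat; lra).
    destruct (Hc e ep) as [N HN]. specialize (HN N (le_n N)).
    specialize (key N). specialize (pos (hsub (u N) l)).
    assert (hm : M <= Rabs M) by apply Rle_abs.
    assert (he : (Rabs M + 1) * e = hnorm (T l)) by (unfold e; field; lra).
    set (h := hnorm (hsub (u N) l)) in *.
    nra. }
  apply zero_of_inner. unfold hnorm in Z0.
  apply sqrt_eq_0; [apply hinner_pos | exact Z0].
Qed.

Theorem lemmaD2 (q : R) (hq : 0 < q < 1) (H : Hilbert) (pi : CP2rep q H) :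
  irreducible pi ->
  (forall x : H, rpi pi I1 I1 x = hzero -> x = hzero) \/
  (forall x : H, rpi pi I1 I1 x = hzero /\ rpi pi I1 I2 x = hzero /\
                 rpi pi I1 I3 x = hzero /\ rpi pi I2 I1 x = hzero /\
                 rpi pi I3 I1 x = hzero).
Proof.
  intro Hirr.
  assert (qnz : q <> 0) by lra.
  assert (P0 : forall i j, rpi pi i j hzero = hzero).
  { intros i j. apply lin0. apply (proj1 (rpi_bounded _ _ pi i j)). }
  assert (inv : forall i j x, rpi pi I1 I1 x = hzero -> rpi pi I1 I1 (rpi pi i j x) = hzero).
  { intros i j x Hx. pose proof (rpi_wd _ _ pi _ _ (keyC q qnz i j) x) as E.
    cbn [evalP] in E. rewrite E, Hx. apply evalP_0. exact P0. }
  destruct (rpi_bounded _ _ pi I1 I1) as [Ha [Hs Hb]].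
  assert (cl : closed_subspace (fun x : H => rpi pi I1 I1 x = hzero)).
  { split; [|split; [|split]].
    - apply P0.
    - intros x y h1 h2. rewrite Ha, h1, h2. apply hadd0.
    - intros a x h1. rewrite Hs, h1. apply hscal0.
    - intros u l hu hc. apply (ker_closed H _ (rpi_bounded _ _ pi I1 I1) u l hu hc). }
  destruct (Hirr _ cl (fun i j x h => inv i j x h)) as [A|B].
  - left; exact A.
  - right.
    assert (side : forall j, j = I2 \/ j = I3 -> forall y,
               rpi pi I1 j y = hzero /\ rpi pi j I1 y = hzero).
    { intros j hj.
      assert (D : forall y, rpi pi j I1 (rpi pi I1 j y) = hzero).
      { intro y. pose proof (rpi_wd _ _ pi _ _ (keyD q qnz j hj) y) as E.
        cbn [evalP] in E. rewrite E, B, P0. apply hscal0. }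
      assert (D1 : forall y, rpi pi I1 j y = hzero).
      { intro y. apply zero_of_inner.
        rewrite (rpi_star _ _ pi I1 j y (rpi pi I1 j y)), D, hinner_0r. reflexivity. }
      intro y. split; [apply D1|]. apply zero_of_inner.
      rewrite (rpi_star _ _ pi j I1 y (rpi pi j I1 y)), D1, hinner_0r. reflexivity. }
    intro x.
    destruct (side I2 (or_introl eq_refl) x), (side I3 (or_intror eq_refl) x).
    repeat split; auto.
Qed.
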